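(* If $g\in G(V)$ satisfies $(\flat f_{0,V})(\iota(g,\mathrm{id}_V))\neq0$, then $g\in P$.
   Context: Let $\mathbb F$ be a finite field of odd cardinality $q$, $\mathbb E/\mathbb F$ of degree $1$ or $2$ with Galois generator $x\mapsto\bar x$; $\mathcal C$ algebraically closed of characteristic not dividing $q$. $(V,\langle\cdot,\cdot\rangle_V)$ is an $\epsilon$-sesquilinear space over $\mathbb E$ (nondegenerate or zero form; $\epsilon_V=1$ if $\mathbb E\ne\mathbb F$), $G(V)$ its isometry group. $V^\square=V^+\oplus V^-$ with $\langle v_1^++w_1^-,v_2^++w_2^-\rangle=\langle v_1,v_2\rangle-\langle w_1,w_2\rangle$; $V^\Delta=\{v^++v^-\}$; $\iota(g_1,g_2)(v^++w^-)=(g_1v)^++(g_2w)^-$; $P_V$ the stabilizer of $V^\Delta$. For $\chi:\mathbb E^\times\to\mathcal C^\times$, $\chi^{-c}(x)=\chi(\bar x)^{-1}$; $I_V(\chi)$ is the space of $f$ on $G(V^\square)$ with $f(pg)=\chi(\det(p|_{V^\Delta}))f(g)$ ($p\in P_V$, nondegenerate case), resp. $f(pg)=\chi(\det(p|_{V^\Delta}))\chi^{-c}(\det(p|_{V^\square/V^\Delta}))f(g)$ (zero-form case); $f_{0,V}$ is the element of $I_V(\chi)$ supported on $P_V$ with $f_{0,V}(\mathrm{id})=1$; $I_X(\chi),I_{V_0}(\chi)$ are defined likewise. Parabolic setup: nondegenerate case $V=X\oplus V_0\oplus Y$ ($X,Y$ totally isotropic in duality, $V_0=(X\oplus Y)^\perp$),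 $P\subset G(V)$ the stabilizer of $0\subset X\subset X\oplus V_0\subset V$ with unipotent radical $N$, $P^\square_X\subset G(V^\square)$ the stabilizer of $0\subset X^\square\subset X^\square\oplus V_0^\square\subset V^\square$ with Levi $L^\square_X$ (stabilizer of $X^\square,V_0^\square,Y^\square$); zero-form case $V=X\oplus V_0$, $P$ the stabilizer of $X$, $P^\square_X$ the stabilizer of $X^\square$ with Levi the stabilizer of $X^\square$ and $V_0^\square$. $\flat f$ is defined by $(\flat f)(g)(l)=\sum_{(u_1,u_2)\in N^\Delta\backslash(N\times N)}f(\iota(u_1,u_2)lg)$ for $g\in G(V^\square)$, $l\in L^\square_X$, with $N^\Delta=\{(u,u)\}$; ''$(\flat f)(g)\neq0$'' means this function of $l$ is not identically zero. *)

(* Defs.v *)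
From HB Require Import structures.
From mathcomp Require Import all_boot all_order all_algebra.
Set Implicit Arguments. Unset Strict Implicit. Unset Printing Implicit Defensive.
Import Order.TTheory GRing.Theory Num.Theory.
Local Open Scope ring_scope.

(* E is a finite field with an involutive field automorphism
   conj (x |-> \bar x); F is its fixed field (so [E:F] is 1 or 2).
   V = column vectors 'cV[E]_n, a linear map g acts by v |-> g *m v (left
   action, composition = matrix product). *)

Section Defs.
Variable E : finFieldType.
Variable conj : {rmorphism E -> E}.

Definition Fset : {set E} := [set x | conj x == x].

Definition form n (M : 'M[E]_n) (v w : 'cV[E]_n) : E :=
  (v^T *m M *m map_mx conj w) 0 0.

Definition isom n (M : 'M[E]_n) (g : 'M[E]_n) : bool :=
  (g \in unitmx) && (g^T *m M *m map_mx conj g == M).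

Definition sesq_space n (eps : E) (M : 'M[E]_n) (zf : bool) : Prop :=
  [/\ eps = 1 \/ eps = -1,
      (exists x, conj x != x) -> eps = 1,
      M = eps *: (map_mx conj M)^T
    & if zf then M = 0 else M \in unitmx].

Definition imset_mx m (g : 'M[E]_m) (S : {set 'cV[E]_m}) : {set 'cV[E]_m} :=
  [set g *m v | v in S].

Definition stab m (g : 'M[E]_m) (S : {set 'cV[E]_m}) : bool := imset_mx g S == S.

Section Sets.
Variable n : nat.
Implicit Types S T X Vz Y : {set 'cV[E]_n}.

Definition subspace S : bool :=
  [&& 0 \in S, [forall v in S, forall w in S, v + w \in S]
    & [forall a : E, forall v in S, a *: v \in S]].

Definition sumset S T : {set 'cV[E]_n} := [set v + w | v in S, w in T].


Definition orth (M : 'M[E]_n) S : {set 'cV[E]_n} :=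
  [set v | [forall w in S, form M v w == 0]].

Definition tot_isotropic (M : 'M[E]_n) S : bool :=
  [forall x in S, forall y in S, form M x y == 0].

Definition in_duality (M : 'M[E]_n) X Y : bool :=
  [forall x in X, [forall y in Y, form M x y == 0] ==> (x == 0)] &&
  [forall y in Y, [forall x in X, form M x y == 0] ==> (y == 0)].

(* Parabolic data.  Nondegenerate case: V = X (+) V0 (+) Y, X, Y totally
   isotropic in duality, V0 = (X (+) Y)^perp.  Zero-form case: V = X (+) V0. *)
Definition parab_data (zf : bool) (M : 'M[E]_n) X V0 Y : Prop :=
  if zf then
    [/\ subspace X, subspace V0, sumset X V0 = setT
      & [forall x in X, forall v in V0, (x + v == 0) ==> (x == 0) && (v == 0)]]
  else
    [/\ [&& subspace X, subspace Y, tot_isotropic M X, tot_isotropic M Y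
           & in_duality M X Y], V0 = orth M (sumset X Y),
        sumset (sumset X V0) Y = setT
      & [forall x in X, forall v in V0, forall y in Y,
           (x + v + y == 0) ==> [&& x == 0, v == 0 & y == 0]]].

(* P : stabilizer in G(V) of the flag 0 < X < X (+) V0 < V (resp. of X) *)
Definition inP (zf : bool) (M : 'M[E]_n) X V0 (g : 'M[E]_n) : bool :=
  isom M g && (if zf then stab g X else stab g X && stab g (sumset X V0)).

(* N : unipotent radical of P = elements of P acting trivially on the
   graded pieces of the flag *)
Definition inN (zf : bool) (M : 'M[E]_n) X V0 (g : 'M[E]_n) : bool :=
  [&& inP zf M X V0 g, [forall x in X, g *m x == x] &
    if zf then [forall v, g *m v - v \in X]
    else [forall v in sumset X V0, g *m v - v \in X] &&
         [forall v, g *m v - v \in sumset X V0]].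

Definition Nset zf M X V0 : {set 'M[E]_n} := [set g | inN zf M X V0 g].

(* doubled space V^box = V^+ (+) V^- realised as 'cV_(n+n) = col_mx v^+ w^- *)
Definition dbl_mx (M : 'M[E]_n) : 'M[E]_(n + n) := block_mx M 0 0 (- M).

Definition iota_sq (g1 g2 : 'M[E]_n) : 'M[E]_(n + n) := block_mx g1 0 0 g2.

Definition dblset S : {set 'cV[E]_(n + n)} := [set col_mx v w | v in S, w in S].

Definition diag_sp : {set 'cV[E]_(n + n)} := [set col_mx v v | v : 'cV[E]_n].

Definition inPV (M : 'M[E]_n) (p : 'M[E]_(n + n)) : bool :=
  isom (dbl_mx M) p && (imset_mx p diag_sp == diag_sp).

(* matrix of p|_{V^Delta} in the basis (e_i^+ + e_i^-) *)
Definition diag_part (p : 'M[E]_(n + n)) : 'M[E]_n := ulsubmx p + ursubmx p.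
(* matrix of the map induced by p on V^box / V^Delta in the basis of the
   classes of e_i^+ *)
Definition quot_part (p : 'M[E]_(n + n)) : 'M[E]_n := ulsubmx p - dlsubmx p.

Definition inL (zf : bool) (M : 'M[E]_n) X V0 Y (l : 'M[E]_(n + n)) : bool :=
  [&& isom (dbl_mx M) l, stab l (dblset X), stab l (dblset V0)
    & zf || stab l (dblset Y)].

(* right cosets N^Delta \ (N x N) *)
Definition NDcosets (NS : {set 'M[E]_n}) : {set {set 'M[E]_n * 'M[E]_n}} :=
  [set [set (u *m pr.1, u *m pr.2) | u in NS] | pr in setX NS NS].

(* (flat f)(h)(l) = sum over (u1,u2) in N^Delta\(N x N) of f(iota_sq(u1,u2) l h),
   each coset being represented by an (arbitrary) chosen element *)
Definition flat (C : ringType) (f : 'M[E]_(n + n) -> C) (NS : {set 'M[E]_n})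
    (h l : 'M[E]_(n + n)) : C :=
  \sum_(Cs in NDcosets NS)
     let pr := odflt (1%:M, 1%:M) [pick x in Cs] in f (iota_sq pr.1 pr.2 *m l *m h).

End Sets.

Definition chi_mc (C : fieldType) (chi : E -> C) (x : E) : C := (chi (conj x))^-1.

(* the character of P_V defining I_V(chi) *)
Definition modchar (C : fieldType) (chi : E -> C) (zf : bool) n
    (p : 'M[E]_(n + n)) : C :=
  chi (\det (diag_part p)) *
  (if zf then chi_mc chi (\det (quot_part p)) else 1).

End Defs.

(* Main.v *)
Require Import Defs.
From HB Require Import structures.
From mathcomp Require Import all_boot all_order all_algebra.
Import Order.TTheory GRing.Theory Num.Theory.
Local Open Scope ring_scope.

Section H.
Variable E : finFieldType.
Variable conj : {rmorphism E -> E}.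

Lemma isomM m (M a b : 'M[E]_m) : isom conj M a -> isom conj M b -> isom conj M (a *m b).
Proof.
case/andP=> ua /eqP ha; case/andP=> ub /eqP hb.
apply/andP; split; first by rewrite unitmx_mul ua ub.
by rewrite trmx_mul map_mxM -!mulmxA (mulmxA a^T) (mulmxA (a^T *m M)) ha mulmxA hb.
Qed.

Lemma isom1 m (M : 'M[E]_m) : isom conj M 1%:M.
Proof. by apply/andP; split; rewrite ?unitmx1 // map_mx1 trmx1 mul1mx mulmx1. Qed.

Lemma isom_iota n (M a b : 'M[E]_n) : isom conj M a -> isom conj M b ->
  isom conj (dbl_mx M) (iota_sq a b).
Proof.
case/andP=> ua /eqP ha; case/andP=> ub /eqP hb.
apply/andP; split.
  by rewrite /iota_sq unitmxE det_ublock unitrM -!unitmxE ua ub.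
rewrite /iota_sq /dbl_mx tr_block_mx map_block_mx !trmx0 !map_mx0 !mulmx_block.
rewrite !(mulmx0, mul0mx, addr0, add0r).
by rewrite mulmxN mulNmx ha hb.
Qed.

Lemma imset_mxM m (a b : 'M[E]_m) S :
  imset_mx (a *m b) S = imset_mx a (imset_mx b S).
Proof.
rewrite /imset_mx -imset_comp; apply: eq_imset => v /=; by rewrite mulmxA.
Qed.

Lemma stabM m (a b : 'M[E]_m) S : stab a S -> stab b S -> stab (a *m b) S.
Proof. by rewrite /stab imset_mxM => /eqP ha /eqP hb; rewrite hb ha. Qed.

Lemma stab1 m S : stab (1%:M : 'M[E]_m) S.
Proof.
rewrite /stab /imset_mx; apply/eqP/setP => v; apply/imsetP/idP.
  by case=> w wS ->; rewrite mul1mx.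
by move=> vS; exists v; rewrite ?mul1mx.
Qed.

Lemma mx_inj m (q : 'M[E]_m) : q \in unitmx -> injective (fun v : 'cV[E]_m => q *m v).
Proof. by move=> uq v w /(congr1 (mulmx (invmx q))); rewrite !mulKmx. Qed.

Lemma stab_sub m (q : 'M[E]_m) S : q \in unitmx -> imset_mx q S \subset S -> stab q S.
Proof.
move=> uq sub; rewrite /stab eqEcard sub /= /imset_mx card_imset //.
exact: mx_inj.
Qed.

Lemma in_dbl n (S : {set 'cV[E]_n}) v w : (col_mx v w \in dblset S) = (v \in S) && (w \in S).
Proof.
apply/imset2P/andP.
  by case=> x y xS yS /eq_col_mx [-> ->].
by case=> vS wS; exists v w.
Qed.

Lemma stab_iota n (a b : 'M[E]_n) S : a \in unitmx -> b \in unitmx ->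
  stab a S -> stab b S -> stab (iota_sq a b) (dblset S).
Proof.
move=> ua ub /eqP ha /eqP hb; apply: stab_sub.
  by rewrite /iota_sq unitmxE det_ublock unitrM -!unitmxE ua ub.
apply/subsetP => z /imsetP [y /imset2P [v w vS wS ->] ->].
rewrite /iota_sq mul_block_col !mul0mx addr0 add0r in_dbl.
apply/andP; split.
  by rewrite -ha /imset_mx imset_f.
by rewrite -hb /imset_mx imset_f.
Qed.

Lemma stab_dbl_sum n (l : 'M[E]_(n + n)) A B : l \in unitmx ->
  stab l (dblset A) -> stab l (dblset B) -> stab l (dblset (sumset A B)).
Proof.
move=> ul /eqP ha /eqP hb; apply: stab_sub => //.
apply/subsetP => z /imsetP [y /imset2P [v w /imset2P [a b aA bB ->]
  /imset2P [a' b' aA' bB' ->] ->] ->].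
rewrite -add_col_mx mulmxDr.
have : l *m col_mx a a' \in dblset A by rewrite -ha imset_f // in_dbl aA aA'.
have : l *m col_mx b b' \in dblset B by rewrite -hb imset_f // in_dbl bB bB'.
case/imset2P => c c' cB cB' ->; case/imset2P => d d' dA dA' ->.
by rewrite add_col_mx in_dbl !(imset2_f (fun x y => x + y)).
Qed.

Lemma key n (g : 'M[E]_n) (q : 'M[E]_(n + n)) (W : {set 'cV[E]_n}) :
  g \in unitmx -> q \in unitmx -> stab q (dblset W) ->
  imset_mx (q *m iota_sq g 1%:M) (diag_sp E n) == diag_sp E n -> stab g W.
Proof.
move=> ug uq /eqP hq; rewrite imset_mxM => /eqP hD.
set BD := imset_mx (iota_sq g 1%:M) (diag_sp E n).
have e1 : imset_mx q (BD :&: dblset W) = diag_sp E n :&: dblset W.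
  rewrite /imset_mx imsetI; last by move=> x y _ _; apply: mx_inj.
  by rewrite -/(imset_mx q BD) hD -/(imset_mx q _) hq.
have c1 : #|BD :&: dblset W| = #|diag_sp E n :&: dblset W|.
  by rewrite -e1 /imset_mx card_imset //; apply: mx_inj.
set T := [set v in W | g *m v \in W].
have eD : diag_sp E n :&: dblset W = [set col_mx v v | v in W].
  apply/setP => z; apply/setIP/imsetP.
    by case=> /imsetP [v _ ->]; rewrite in_dbl => /andP [vW _]; exists v.
  by case=> v vW ->; split; [apply/imsetP; exists v | rewrite in_dbl vW].
have eB : BD :&: dblset W = [set col_mx (g *m v) v | v in T].
  apply/setP => z; apply/setIP/imsetP.
    case=> /imsetP [y /imsetP [v _ ->] ->].
    rewrite /iota_sq mul_block_col !mul0mx addr0 add0r mul1mx in_dbl => /andP [h1 h2].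
    by exists v => //; rewrite inE h1 h2.
  case=> v; rewrite inE => /andP [vW gvW] ->; split.
    apply/imsetP; exists (col_mx v v); last first.
      by rewrite /iota_sq mul_block_col !mul0mx addr0 add0r mul1mx.
    by apply/imsetP; exists v.
  by rewrite in_dbl gvW vW.
have cT : #|T| = #|W|.
  move: c1; rewrite eD eB !card_in_imset //.
    by move=> x y _ _ /eq_col_mx [].
  by move=> x y _ _ /eq_col_mx [].
have TW : T = W.
  apply/eqP; rewrite eqEcard cT leqnn andbT; apply/subsetP => v; rewrite inE.
  by case/andP.
apply: stab_sub => //; apply/subsetP => z /imsetP [v vW ->].
by move: vW; rewrite -{1}TW inE => /andP [].
Qed.
End H.

Theorem mainTheorem10 (E : finFieldType) (conj : {rmorphism E -> E})
    (C : closedFieldType) (chi : E -> C) (n : nat) (M : 'M[E]_n) (eps : E)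
    (zf : bool) (X V0 Y : {set 'cV[E]_n}) (f : 'M[E]_(n + n) -> C) :
  involutive conj ->
  odd #|Fset conj| ->
  (forall p : nat, p \in [pchar C] -> ~~ (p %| #|Fset conj|)%N) ->
  (forall x y : E, x != 0 -> y != 0 -> chi (x * y) = chi x * chi y) ->
  (forall x : E, x != 0 -> chi x != 0) ->
  sesq_space conj eps M zf ->
  parab_data conj zf M X V0 Y ->
  (* f = f_{0,V} : f in I_V(chi), supported on P_V, f(id) = 1 *)
  (forall p g : 'M[E]_(n + n), inPV conj M p -> isom conj (dbl_mx M) g ->
     f (p *m g) = modchar conj chi zf p * f g) ->
  (forall g : 'M[E]_(n + n), isom conj (dbl_mx M) g -> f g != 0 -> inPV conj M g) ->
  f 1%:M = 1 ->
  forall g : 'M[E]_n, isom conj M g ->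
  (exists l : 'M[E]_(n + n), inL conj zf M X V0 Y l &&
      (flat f (Nset conj zf M X V0) (iota_sq g 1%:M) l != 0)) ->
  inP conj zf M X V0 g.
Proof.
move=> _ _ _ _ _ _ _ _ fsupp _ g isog [l /andP [Ll Hflat]].
set NS := Nset conj zf M X V0.
set W := sumset X V0.
pose Q (a : 'M[E]_n) := [&& isom conj M a, stab a X & (zf || stab a W)].
have QN : forall u, u \in NS -> Q u.
  move=> u; rewrite inE /inN /inP => /andP [/andP [isu st] _].
  rewrite /Q isu /=; move: st; case: (zf) => [->//|/andP [-> ->]] //.
have QM : forall a b, Q a -> Q b -> Q (a *m b).
  move=> a b /and3P [ia sa wa] /and3P [ib sb wb].
  rewrite /Q isomM // stabM //=; move: wa wb; case: (zf) => //= wa wb.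
  exact: stabM.
have Q1 : Q 1%:M by rewrite /Q isom1 !stab1 orbT.
have : ~~ [forall Cs in NDcosets NS,
   (let pr := odflt (1%:M, 1%:M) [pick x in Cs] in
      f (iota_sq pr.1 pr.2 *m l *m iota_sq g 1%:M)) == 0].
  apply: contra Hflat => /forall_inP H; rewrite /flat big1 // => Cs /H /eqP.
  by [].
case/forall_inPn => Cs CsN /=.
set pr := odflt _ _ => tN.
have [Q1p Q2p] : Q pr.1 /\ Q pr.2.
  rewrite /pr; case: pickP => [x xC|_] /=; last by [].
  case/imsetP: CsN => pr0; rewrite inE => /andP [p1 p2] eC.
  move: xC; rewrite eC => /imsetP [u uN ->] /=.
  by split; apply: QM; apply: QN.
case/and3P: Q1p => i1 s1 w1; case/and3P: Q2p => i2 s2 w2.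
case/and4P: Ll => il sX sV0 _.
have ih : isom conj (dbl_mx M) (iota_sq pr.1 pr.2 *m l *m iota_sq g 1%:M).
  by rewrite !isomM // ?isom_iota // isom1.
have /andP [_ hD] := fsupp _ ih tN.
have iq : isom conj (dbl_mx M) (iota_sq pr.1 pr.2 *m l) by rewrite isomM // isom_iota.
have uq : iota_sq pr.1 pr.2 *m l \in unitmx by case/andP: iq.
have ul : l \in unitmx by case/andP: il.
have u1 : pr.1 \in unitmx by case/andP: i1.
have u2 : pr.2 \in unitmx by case/andP: i2.
have ug : g \in unitmx by case/andP: isog.
have gX : stab g X.
  apply: (@key E _ g _ _ ug uq _ hD).
  by apply: stabM => //; apply: stab_iota.
rewrite /inP isog /=; move: w1 w2; case: (zf) => //= w1 w2.
rewrite gX /=; apply: (@key E _ g _ _ ug uq _ hD).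
apply: stabM; first exact: stab_iota.
by apply: stab_dbl_sum.
Qed.
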